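(* Let $p$ be an odd prime and $N=\mathbb Z_{p^2}$. Let $\Phi$ be the unique subgroup of order $p-1$ of the unit group $\mathbb Z_{p^2}^\times$, acting on $(\mathbb Z_{p^2},+)$ by multiplication. Let $M=\{p\}$, so that the orbit $p\Phi = p\mathbb Z_{p^2}\setminus\{0\}$ is the zero multiplier orbit, and let the remaining orbit representatives $R\setminus M$ be the elements of a coset $c+p\mathbb Z_{p^2}$ with $c$ a unit. With multiplication $a*b=0$ if $b\in p\mathbb Z_{p^2}$ and $a*b=a\phi_b$ otherwise (where $b=r_b\phi_b$, $r_b\in R\setminus M$, $\phi_b\in\Phi$), $(N,+,* )$ is a planar nearring and $D(N)=p\mathbb Z_{p^2}$; in particular all distributive elements are zero multipliers.
   Context: A (right) nearring $(N,+,* )$ is a set with a group $(N,+)$, a semigroup $(N,* )$, and right distributivity $(a+b)*c=a*c+b*c$. $N$ is planar if the relation $a\cong b$ ($x*a=x*b$ for all $x$) has at least $3$ classes and for all $a,b,c$ with $a\not\cong b$ the equation $x*a=x*b+c$ has a unique solution. Zero multipliers are the $n$ with $x*n=0$ for all $x$. $D(N)=\{n: n*(a+b)=n*a+n*b\ \forall a,b\}$. *)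

(* Defs.v *)
From HB Require Import structures.
From mathcomp Require Import all_boot all_order all_algebra all_fingroup.
Set Implicit Arguments. Unset Strict Implicit. Unset Printing Implicit Defensive.
Import GRing.Theory.
Local Open Scope ring_scope.

Definition nearring (N : zmodType) (mul : N -> N -> N) : Prop :=
  associative mul /\ (forall a b c : N, mul (a + b) c = mul a c + mul b c).

Definition ncong (N : zmodType) (mul : N -> N -> N) (a b : N) : Prop :=
  forall x : N, mul x a = mul x b.

Definition planar (N : zmodType) (mul : N -> N -> N) : Prop :=
  (exists a b c : N, [/\ ~ ncong mul a b, ~ ncong mul a c & ~ ncong mul b c]) /\
  (forall a b c : N, ~ ncong mul a b -> exists! x : N, mul x a = mul x b + c).

Definition distrib_elt (N : zmodType) (mul : N -> N -> N) (n : N) : Prop :=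
  forall a b : N, mul n (a + b) = mul n a + mul n b.

Definition zero_mult (N : zmodType) (mul : N -> N -> N) (n : N) : Prop :=
  forall x : N, mul x n = 0.

Definition in_pZ (p : nat) (x : 'Z_(p ^ 2)) : bool := (p %| (x : nat))%N.

(** phi_b: the element of Phi with b * phi^-1 in c + p Z_{p^2}
    (i.e. b = r_b phi_b with r_b in the coset c + pZ) *)
Definition phi_of (p : nat) (Phi : {set {unit 'Z_(p ^ 2)}}) (c b : 'Z_(p ^ 2))
  : 'Z_(p ^ 2) :=
  match [pick f in Phi | in_pZ (b / val f - c)] with
  | Some f => val f
  | None => 1
  end.

Definition Zmul (p : nat) (Phi : {set {unit 'Z_(p ^ 2)}}) (c : 'Z_(p ^ 2))
  (a b : 'Z_(p ^ 2)) : 'Z_(p ^ 2) :=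
  if in_pZ b then 0 else a * phi_of Phi c b.

(* Main.v *)
Require Import Defs.
From HB Require Import structures.
From mathcomp Require Import all_boot all_order all_algebra all_fingroup.
From mathcomp Require Import cyclic zify.
Set Implicit Arguments. Unset Strict Implicit. Unset Printing Implicit Defensive.
Import GRing.Theory FinRing.Theory.
Local Open Scope ring_scope.

Section Aux.
Variable p : nat.
Hypothesis hp : prime p.
Local Notation Z := ('Z_(p ^ 2)).

Lemma p2_gt1 : (1 < p ^ 2)%N.
Proof. rewrite expnS expn1; have h := prime_gt1 hp; exact: (leq_trans h (leq_pmulr _ (ltnW h))). Qed.

Lemma in_pZ_nat (n : nat) : in_pZ (n%:R : Z) = (p %| n)%N.
Proof.
rewrite /in_pZ val_Zp_nat ?p2_gt1 //.
have h : (p %| p ^ 2)%N by rewrite expnS dvdn_mulr.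
by rewrite /dvdn (modn_dvdm _ h).
Qed.

Lemma in_pZE (x : Z) : in_pZ x = (p %| x)%N.
Proof. by []. Qed.

Lemma in_pZ_val (x : Z) : x = (x : nat)%:R.
Proof. by rewrite natr_Zp. Qed.

Lemma in_pZM (x y : Z) : in_pZ (x * y) = in_pZ x || in_pZ y.
Proof.
rewrite [x]in_pZ_val [y]in_pZ_val -natrM !in_pZ_nat.
by rewrite Euclid_dvdM.
Qed.

Lemma in_pZD (x y : Z) : in_pZ x -> in_pZ y -> in_pZ (x + y).
Proof.
rewrite [x]in_pZ_val [y]in_pZ_val -natrD !in_pZ_nat; exact: dvdn_add.
Qed.

Lemma unit_in_pZ (x : Z) : (x \is a GRing.unit) = ~~ in_pZ x.
Proof.
rewrite {1}[x]in_pZ_val unitZpE ?p2_gt1 // /in_pZ.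
by rewrite coprime_pexpl // prime_coprime.
Qed.


Lemma in_pZN (x : Z) : in_pZ (- x) = in_pZ x.
Proof.
have h : ~~ in_pZ (-1 : Z) by rewrite -unit_in_pZ unitrN unitr1.
by rewrite -mulN1r in_pZM (negbTE h).
Qed.

Lemma in_pZB (x y : Z) : in_pZ x -> in_pZ y -> in_pZ (x - y).
Proof. by move=> hx hy; apply: in_pZD; rewrite ?in_pZN. Qed.

Lemma in_pZ0 : in_pZ (0 : Z).
Proof. by rewrite -(mulr0n (1 : Z)) in_pZ_nat dvdn0. Qed.

Lemma in_pZp : in_pZ (p%:R : Z).
Proof. by rewrite in_pZ_nat dvdnn. Qed.

Lemma in_pZ1 : ~~ in_pZ (1 : Z).
Proof. by rewrite -unit_in_pZ unitr1. Qed.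

Lemma in_pZ_mul0 (x y : Z) : in_pZ x -> in_pZ y -> x * y = 0.
Proof.
rewrite [x]in_pZ_val [y]in_pZ_val -natrM !in_pZ_nat => hx hy.
rewrite -Zp_nat_mod ?p2_gt1 //.
have hpp : (p ^ 2 %| p * p)%N by rewrite expnS expn1.
have := dvdn_trans hpp (dvdn_mul hx hy).
by rewrite /dvdn => /eqP ->.
Qed.

Lemma in_pZMr (x u : Z) : u \is a GRing.unit -> in_pZ (x * u) = in_pZ x.
Proof. by rewrite unit_in_pZ in_pZM => /negbTE ->; rewrite orbF. Qed.

Lemma in_pZMl (x u : Z) : u \is a GRing.unit -> in_pZ (u * x) = in_pZ x.
Proof. by move=> hu; rewrite mulrC in_pZMr. Qed.

Lemma in_pZ_sym (x y : Z) : in_pZ (x - y) = in_pZ (y - x).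
Proof. by rewrite -in_pZN opprB. Qed.

Lemma in_pZ_trans (x y z : Z) : in_pZ (x - y) -> in_pZ (y - z) -> in_pZ (x - z).
Proof. by move=> h1 h2; have := in_pZD h1 h2; rewrite addrA subrK. Qed.


Lemma modp_eq (x y : Z) : in_pZ (x - y) = ((x : nat) %% p == (y : nat) %% p)%N.
Proof.
have ex : x = ((y : nat) + (((x - y)%R : Z) : nat))%:R.
  by rewrite natrD !natr_Zp addrC subrK.
have vx : (x : nat) = (((y : nat) + (((x - y)%R : Z) : nat)) %% p ^ 2)%N.
  by rewrite {1}ex val_Zp_nat ?p2_gt1.
have h : (p %| p ^ 2)%N by rewrite expnS dvdn_mulr.
rewrite vx (modn_dvdm _ h) /in_pZ /dvdn.
by rewrite -{2}[(y : nat)]addn0 eqn_modDl mod0n.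
Qed.

Lemma pow1p (x : Z) n : in_pZ x -> (1 + x) ^+ n = 1 + n%:R * x.
Proof.
move=> hx; elim: n => [|n IH]; first by rewrite expr0 mul0r addr0.
rewrite exprS IH mulrDl mul1r mulrDr mulr1 mulrA (mulrC x) -mulrA (in_pZ_mul0 hx hx).
by rewrite mulr0 addr0 mulrSr mulrDl mul1r addrA.
Qed.

Variable Phi : {group {unit Z}}.
Hypothesis hPhi : #|Phi| = (p - 1)%N.

Lemma val_unit_unit (f : {unit Z}) : (val f) \is a GRing.unit.
Proof. exact: valP. Qed.

Lemma PhiU (f g : {unit Z}) : f \in Phi -> g \in Phi ->
  in_pZ (val f - val g) -> f = g.
Proof.
move=> fP gP hfg.
set h := (f * g^-1)%g.
have hP : h \in Phi by rewrite groupM ?groupV.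
have vh : in_pZ (val h - 1).
  have -> : val h - 1 = (val f - val g) * (val g)^-1.
    by rewrite val_unitM val_unitV mulrBl divrr ?val_unit_unit.
  by rewrite in_pZMr ?unitrV ?val_unit_unit.
have hp1 : (h ^+ p = 1)%g.
  apply: val_inj; rewrite val_unitX val_unit1.
  rewrite -(subrK 1 (val h)) addrC pow1p // (in_pZ_mul0 (in_pZp) vh) addr0.
  by [].
have hp2 : (h ^+ (p - 1) = 1)%g by rewrite -hPhi expg_cardG.
have eh : h = 1%g.
  have e : p = (p - 1).+1 by rewrite subn1 prednK ?prime_gt0.
  have : (h ^+ (p - 1).+1 = 1)%g by rewrite -e.
  by rewrite expgS hp2 mulg1.
by apply/eqP; rewrite eq_mulgV1 -/h eh.
Qed.

Lemma PhiEx (u : Z) : u \is a GRing.unit ->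
  exists2 f : {unit Z}, f \in Phi & in_pZ (val f - u).
Proof.
move=> hu.
have p_gt0 := prime_gt0 hp.
pose r (x : Z) : 'I_p := Ordinal (ltn_pmod (x : nat) p_gt0).
pose i0 : 'I_p := Ordinal p_gt0.
have rne (x : Z) : x \is a GRing.unit -> r x != i0.
  rewrite unit_in_pZ /in_pZ /dvdn => hx; apply/eqP => /(congr1 val) /= e.
  by rewrite e eqxx in hx.
have sub : (fun f : {unit Z} => r (val f)) @: Phi \subset [set~ i0].
  apply/subsetP => _ /imsetP [f _ ->]; rewrite in_setC1; exact: rne (val_unit_unit f).
have card : #|(fun f : {unit Z} => r (val f)) @: Phi| = #|[set~ i0]|.
  rewrite cardsC1 card_ord -subn1 -hPhi card_in_imset //.
  move=> f g fP gP /(congr1 val) /= e; apply: PhiU => //.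
  by rewrite modp_eq e.
have eqS : (fun f : {unit Z} => r (val f)) @: Phi = [set~ i0].
  by apply/eqP; rewrite eqEcard sub card leqnn.
have : r u \in [set~ i0] by rewrite in_setC1 rne.
rewrite -eqS => /imsetP [f fP /(congr1 val) /= e].
by exists f => //; rewrite modp_eq e.
Qed.


Variable c : Z.
Hypothesis hc : c \is a GRing.unit.

Lemma conv (b g : Z) : g \is a GRing.unit -> in_pZ (b / g - c) = in_pZ (g - b / c).
Proof.
move=> hg.
have hu : g / c \is a GRing.unit by rewrite unitrMl ?unitrV.
rewrite -(in_pZMr (b / g - c) hu) in_pZ_sym.
congr in_pZ.
by rewrite mulrBl -!mulrA mulKr // mulrCA divrr // mulr1.
Qed.

Lemma phiE (b : Z) (f : {unit Z}) : f \in Phi -> in_pZ (val f - b / c) ->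
  phi_of Phi c b = val f.
Proof.
move=> fP hf; rewrite /phi_of; case: pickP => [g /andP [gP hg] | H].
  congr val; apply: PhiU => //.
  rewrite conv ?val_unit_unit // in hg.
  by apply: in_pZ_trans hg _; rewrite in_pZ_sym.
by move: (H f); rewrite fP conv ?val_unit_unit // hf.
Qed.

Lemma phiEx (b : Z) : ~~ in_pZ b ->
  exists2 f : {unit Z}, f \in Phi & phi_of Phi c b = val f /\ in_pZ (val f - b / c).
Proof.
move=> hb.
have hu : b / c \is a GRing.unit by rewrite unitrMl ?unitrV // unit_in_pZ.
have [f fP hf] := PhiEx hu.
by exists f => //; split => //; apply: phiE.
Qed.


Lemma Zmul0 (x b : Z) : in_pZ b -> Zmul Phi c x b = 0.
Proof. by rewrite /Zmul => ->. Qed.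

Lemma Zmul_u (x b : Z) : ~~ in_pZ b -> Zmul Phi c x b = x * phi_of Phi c b.
Proof. by rewrite /Zmul => /negbTE ->. Qed.

Lemma Zassoc : associative (Zmul Phi c).
Proof.
move=> a b d; case: (boolP (in_pZ d)) => hd.
  by rewrite (Zmul0 _ hd) (Zmul0 _ hd) (Zmul0 _ in_pZ0).
have [fd fdP [ed hfd]] := phiEx hd; rewrite !(Zmul_u _ hd) ed.
case: (boolP (in_pZ b)) => hb.
  by rewrite (Zmul0 _ hb) mul0r Zmul0 // in_pZM hb.
have [fb fbP [eb hfb]] := phiEx hb; rewrite (Zmul_u _ hb) eb.
have hbd : ~~ in_pZ (b * val fd) by rewrite in_pZMr ?val_unit_unit.
rewrite (Zmul_u _ hbd) (@phiE _ (fb * fd)%g) ?groupM // ?val_unitM ?mulrA //.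
by rewrite mulrAC -mulrBl in_pZMr ?val_unit_unit.
Qed.

Lemma Zrdistr (a b d : Z) : Zmul Phi c (a + b) d = Zmul Phi c a d + Zmul Phi c b d.
Proof. by rewrite /Zmul; case: ifP => _; [rewrite addr0 | rewrite mulrDl]. Qed.

Lemma mulB (b : Z) : exists B, (forall x, Zmul Phi c x b = x * B) /\
  ((in_pZ b /\ B = 0) \/ (~~ in_pZ b /\ exists2 f : {unit Z}, f \in Phi & B = val f)).
Proof.
case: (boolP (in_pZ b)) => hb.
  by exists 0; split; [move=> x; rewrite Zmul0 ?mulr0 | left].
have [f fP [ef _]] := phiEx hb.
exists (val f); split; first by move=> x; rewrite Zmul_u // ef.
by right; split => //; exists f.
Qed.

Lemma Zplanar2 (a b c0 : Z) : ~ ncong (Zmul Phi c) a b ->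
  exists! x : Z, Zmul Phi c x a = Zmul Phi c x b + c0.
Proof.
move=> hn.
have [A [HA sA]] := mulB a; have [B [HB sB]] := mulB b.
have hAB : A - B \is a GRing.unit.
  rewrite unit_in_pZ; case: sA => [[_ eA]|[_ [f fP eA]]]; case: sB => [[_ eB]|[_ [g gP eB]]]; rewrite eA eB.
  - by exfalso; apply: hn; rewrite /ncong => x; rewrite HA HB eA eB.
  - by rewrite add0r in_pZN -unit_in_pZ val_unit_unit.
  - by rewrite subr0 -unit_in_pZ val_unit_unit.
  - apply/negP => h; apply: hn; rewrite /ncong => x; rewrite HA HB eA eB.
    by rewrite (PhiU fP gP h).
have key x : (x * A = x * B + c0) <-> (x * (A - B) = c0).
  rewrite mulrBr; split => [->|<-]; first by rewrite addrC addKr.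
  by rewrite addrC subrK.
exists (c0 / (A - B)); split.
  by rewrite HA HB; apply/key; rewrite divrK.
move=> x; rewrite HA HB => /key <-.
by rewrite mulrK.
Qed.

Lemma phi_c1 (k : Z) (f : {unit Z}) : f \in Phi -> k = val f -> phi_of Phi c (c * k) = k.
Proof.
move=> fP ->; apply: phiE => //.
by rewrite mulrAC divrr // mul1r subrr in_pZ0.
Qed.

Lemma Zdistr_pZ (n : Z) : in_pZ n -> distrib_elt (Zmul Phi c) n.
Proof.
move=> hn.
have E x : Zmul Phi c n x = n * x / c.
  case: (boolP (in_pZ x)) => hx.
    by rewrite Zmul0 // (in_pZ_mul0 hn hx) mul0r.
  have [f fP [ef hf]] := phiEx hx.
  rewrite Zmul_u // ef; apply/eqP; rewrite -subr_eq0 -mulrA -mulrBr.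
  by rewrite (in_pZ_mul0 hn hf).
by move=> a b; rewrite !E mulrDr mulrDl.
Qed.


Hypothesis hodd : odd p.

Lemma p_gt2 : (2 < p)%N.
Proof.
have := prime_gt1 hp; rewrite leq_eqVlt => /orP [/eqP e|//].
by move: hodd; rewrite -e.
Qed.

Lemma Zdistr_inv (n : Z) : distrib_elt (Zmul Phi c) n -> in_pZ n.
Proof.
move=> hd; case: (boolP (in_pZ n)) => // hn; exfalso.
have hnu : n \is a GRing.unit by rewrite unit_in_pZ.
have nk k : (0 < k < p)%N -> ~~ in_pZ (c * k%:R).
  move=> /andP [k0 kp]; rewrite in_pZM negb_or -unit_in_pZ hc /= in_pZ_nat.
  by apply/negP => /(dvdn_leq k0); rewrite leqNgt kp.
have claim k : (0 < k < p)%N -> phi_of Phi c (c * k%:R) = k%:R.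
  elim: k => [//|k IH] /andP [_ kp].
  case: k IH kp => [_ _|k IH kp].
    by apply: (phi_c1 (group1 Phi)); rewrite val_unit1.
  have h1 : (0 < k.+1 < p)%N by rewrite ltn0Sn /= ltnW.
  have h2 : (0 < k.+2 < p)%N by rewrite ltn0Sn.
  have := hd (c * k.+1%:R) c.
  have e : c * k.+1%:R + c = c * k.+2%:R by rewrite (mulrSr _ k.+1) mulrDr mulr1.
  have hcu : ~~ in_pZ c by rewrite -unit_in_pZ.
  rewrite e (Zmul_u _ (nk _ h2)) (Zmul_u _ (nk _ h1)) (Zmul_u _ hcu) (IH h1).
  have -> : phi_of Phi c c = 1.
    by have := @phi_c1 1 1%g (group1 Phi); rewrite mulr1 val_unit1; apply.
  by rewrite -mulrDr -(mulrSr _ k.+1) => /(mulrI hnu).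
have inPhi k : (0 < k < p)%N -> exists2 f : {unit Z}, f \in Phi & val f = k%:R.
  move=> hk; have [f fP [ef _]] := phiEx (nk k hk).
  by exists f => //; rewrite -ef claim.
have p2 := p_gt2.
pose m := p.+1./2.
have em : (m * 2 = p.+1)%N.
  by rewrite muln2 -[in RHS](odd_double_half p.+1) /= hodd.
have [f2 f2P e2] := inPhi 2%N ltac:(apply/andP; split => //).
have [fm fmP emm] := inPhi m ltac:(apply/andP; split; lia).
have h : in_pZ (val (fm * f2)%g - val (1 : {unit Z})%g).
  rewrite val_unitM val_unit1 e2 emm -natrM em mulrSr addrK; exact: in_pZp.
have := PhiU (groupM fmP f2P) (group1 Phi) h.
move=> /(congr1 val); rewrite val_unitM val_unit1 e2 emm -natrM em mulrSr.
move=> /(congr1 (fun z => z - 1)); rewrite /= addrK subrr => /(congr1 (@nat_of_ord _)).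
rewrite val_Zp_nat ?p2_gt1 // modn_small; last first.
  by rewrite expnS expn1 -{1}(mul1n p) ltn_mul2r prime_gt0 // prime_gt1.
by move=> e; move: (prime_gt0 hp); rewrite e.
Qed.

End Aux.

Unset Implicit Arguments.

Theorem mainTheorem13 (p : nat) (Phi : {group {unit 'Z_(p ^ 2)}})
    (c : 'Z_(p ^ 2)) :
  prime p -> odd p -> #|Phi| = (p - 1)%N -> c \is a GRing.unit ->
  [/\ nearring (Zmul Phi c),
      planar (Zmul Phi c),
      (forall n : 'Z_(p ^ 2), distrib_elt (Zmul Phi c) n <-> in_pZ n)
    & (forall n : 'Z_(p ^ 2), distrib_elt (Zmul Phi c) n -> zero_mult (Zmul Phi c) n)].
Proof.
move=> hp hodd hPhi hc.
have D n : distrib_elt (Zmul Phi c) n <-> in_pZ n.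
  by split; [apply: Zdistr_inv | apply: Zdistr_pZ].
split => //.
- split; [exact: Zassoc | exact: Zrdistr].
- split; last by move=> a b c0; apply: Zplanar2.
  have p2 := p_gt2 hp hodd.
  have : Phi :!=: 1%G by rewrite -cardG_gt1 hPhi; lia.
  move=> /trivgPn [g gP g1].
  have hcu : ~~ in_pZ c by rewrite -unit_in_pZ.
  have hcg : ~~ in_pZ (c * val g) by rewrite in_pZMr ?val_unit_unit.
  have E1 x : Zmul Phi c x c = x.
    rewrite Zmul_u // -{2}(mulr1 c) (phi_c1 hp hPhi hc (group1 Phi)) ?mulr1 //.
  have Eg x : Zmul Phi c x (c * val g) = x * val g.
    by rewrite Zmul_u // (phi_c1 hp hPhi hc gP).
  have E0 x : Zmul Phi c x 0 = 0 by rewrite Zmul0 // in_pZ0.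
  exists 0, c, (c * val g); split => /(_ 1).
  + by rewrite E0 E1 => /esym /eqP; rewrite oner_eq0.
  + rewrite E0 Eg mul1r => e; move: (val_unit_unit g); rewrite -e unitr0.
    by [].
  + rewrite E1 Eg mul1r => e; move: g1; rewrite -(inj_eq val_inj) val_unit1 e eqxx.
    by [].
- move=> n /D hn x; exact: Zmul0.
Qed.
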